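(* Let $T_*>\tau_D$ be a constant. There exist a continuous function $\mu:[0,T_*]\to(0,1]$ and a constant $\gamma_1>0$, depending only on $n,a^*,b_*,\tau_D,T_*$, with $\mu(0)=1$, $\mu$ strictly decreasing on $[0,\tau_D]$, $\mu$ strictly increasing on $[\tau_D,T_*]$ and $\mu(T_* )<1$, such that the following holds. For any trajectory of system (5) with $\|z\|_\infty<\infty$, any $t_0\ge0$, and any $i\in\mathcal V_F$, $j\in\mathcal V_L$ such that the arc $(j,i)$ belongs to $\mathcal E_{\sigma(t)}$ for all $t\in[t_0,t_0+\tau_D)$, we have $$|x_i(t)|_{\mathcal L(y(t))}\le\mu(t-t_0)\,|x(t_0)|_{\mathcal L(y(t_0))}+\gamma_1\|z\|_\infty\quad\text{for all }t\in[t_0,t_0+T_*].$$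
   Context: Standing setup. Fix integers $n\ge 2$, $k\ge 1$, $d\ge 1$. The follower set is $\mathcal V_F=\{1,\dots,n\}$ and the leader set is $\mathcal V_L=\{\hat 1,\dots,\hat k\}$ (disjoint from $\mathcal V_F$); $\mathcal V=\mathcal V_F\cup\mathcal V_L$. The interaction topology is a time-varying digraph $\mathcal G_{\sigma(t)}=(\mathcal V,\mathcal E_{\sigma(t)})$, where $\sigma:[0,\infty)\to\mathcal P$ is a piecewise constant switching signal taking values in a finite set $\mathcal P$ of digraphs on $\mathcal V$; no arc of any of these digraphs enters a leader. An arc $(j,i)$ means that $i$ receives information from $j$. Dwell-time assumption: any two consecutive switching instants of $\sigma$ are separated by at least $\tau_D>0$. For $i\in\mathcal V_F$, $N_i(\sigma(t))=\{j\in\mathcal V_F:(j,i)\in\mathcal E_{\sigma(t)}\}$ and $L_i(\sigma(t))=\{j\in\mathcal V_L:(j,i)\in\mathcal E_{\sigma(t)}\}$. System (5): $\dot y_i=u_i(y,t)$ for $i=1,\dots,k$, and $\dot x_i=\sum_{j\in N_i(\sigma(t))}a_{ij}(x,y,t)(x_j-x_i)+\sum_{j\in L_i(\sigma(t))}b_{ij}(x,y,t)(y_j-x_i)+w_i(t)$ for $i=1,\dots,n$, where $x_i,y_j\in\mathbb R^d$, $x=(x_1,\dots,x_n)$, $y=(y_1,\dots,y_k)$; each $u_i(y,t)$ is continuous in $y$ and piecewise continuous in $t$; each $w_i$ is continuous; the weights $a_{ij},b_{ij}$ are continuous and satisfy $a_*\le a_{ij}(x,y,t)\le a^*$, $b_{ij}(x,y,t)\ge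 b_*$ for all $x,y,t$, with constants $0<a_*\le a^*$, $b_*>0$. Along a trajectory, $z(t)=(u_1(y(t),t),\dots,u_k(y(t),t),w_1(t),\dots,w_n(t))\in\mathbb R^{(n+k)d}$ and $\|z\|_\infty=\sup_{t\ge0}|z(t)|$. Set notation: $|\cdot|$ is the Euclidean norm; for a closed convex $K\subset\mathbb R^d$, $|v|_K=\inf_{p\in K}|v-p|$; $\mathcal L(y(t))=\mathrm{co}\{y_1(t),\dots,y_k(t)\}$ (convex hull); $|x(t)|_{\mathcal L(y(t))}=\max_{i\in\mathcal V_F}|x_i(t)|_{\mathcal L(y(t))}$. *)

(* Defs.v *)
From Stdlib Require Import Reals Lra Lia List ClassicalEpsilon.
Open Scope R_scope.

(* Vectors of R^d are functions nat -> R (only coordinates l < d matter).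
   A stacked state x : nat -> nat -> R gives x i l = l-th coordinate of x_i. *)
Definition vec := nat -> R.
Definition stack := nat -> nat -> R.

Fixpoint fsum (m : nat) (f : nat -> R) : R :=
  match m with O => 0 | S m' => fsum m' f + f m' end.

(* fmax m f = max (0, f 0, ..., f (m-1)) ; used for nonnegative f *)
Fixpoint fmax (m : nat) (f : nat -> R) : R :=
  match m with O => 0 | S m' => Rmax (fmax m' f) (f m') end.

Definition enorm (d : nat) (v : vec) : R := sqrt (fsum d (fun l => v l ^ 2)).

Definition is_glb (S : R -> Prop) (r : R) : Prop :=
  (forall s, S s -> r <= s) /\ (forall m, (forall s, S s -> m <= s) -> m <= r).
Definition Rinf (S : R -> Prop) : R :=
  epsilon (inhabits 0) (fun r => is_glb S r).

Definition in_hull (k d : nat) (Y : stack) (p : vec) : Prop :=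
  exists lam : nat -> R,
    (forall j, (j < k)%nat -> 0 <= lam j) /\ fsum k lam = 1 /\
    (forall l, (l < d)%nat -> p l = fsum k (fun j => lam j * Y j l)).

Definition dist_hull (k d : nat) (Y : stack) (v : vec) : R :=
  Rinf (fun r => exists p, in_hull k d Y p /\ r = enorm d (fun l => v l - p l)).

(* |x|_{L(y)} = max_i |x_i|_{L(y)} *)
Definition dist_state (n k d : nat) (Y X : stack) : R :=
  fmax n (fun i => dist_hull k d Y (X i)).

Definition loc_finite (E : R -> Prop) : Prop :=
  forall T, exists l : list R, forall t, E t -> 0 <= t -> t <= T -> In t l.

Definition cont_nonneg (f : R -> R) : Prop :=
  forall t, 0 <= t -> forall eps, eps > 0 -> exists delta, delta > 0 /\
    forall s, 0 <= s -> Rabs (s - t) < delta -> Rabs (f s - f t) < eps.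

Definition close (m d : nat) (delta : R) (X X' : stack) : Prop :=
  forall i l, (i < m)%nat -> (l < d)%nat -> Rabs (X' i l - X i l) < delta.

Definition cont_weight (n k d : nat) (f : stack -> stack -> R -> R) : Prop :=
  forall x y t, 0 <= t -> forall eps, eps > 0 -> exists delta, delta > 0 /\
    forall x' y' t', 0 <= t' -> close n d delta x x' -> close k d delta y y' ->
      Rabs (t' - t) < delta -> Rabs (f x' y' t' - f x y t) < eps.

(* Dwell-time switching signal with values in P = {0,...,Np-1}:
   switching instants (a superset of the actual ones) s_0 = 0 < s_1 < ...
   with s_(m+1) - s_m >= tauD and sigma constant on each [s_m, s_(m+1)). *)
Definition dwell_signal (Np : nat) (tauD : R) (sigma : R -> nat) : Prop :=
  (forall t, 0 <= t -> (sigma t < Np)%nat) /\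
  exists s : nat -> R, s O = 0 /\
    (forall m, s (S m) - s m >= tauD) /\
    (forall m t, s m <= t -> t < s (S m) -> sigma t = sigma (s m)).

(* Graph p is encoded by  Eff p j i  (arc from follower j to follower i)
   and  Elf p j i  (arc from leader j to follower i); no arc enters a leader. *)
Definition follower_rhs (n k : nat)
  (Eff Elf : nat -> nat -> nat -> bool) (sigma : R -> nat)
  (a b : nat -> nat -> stack -> stack -> R -> R)
  (w : nat -> R -> vec) (x y : stack) (t : R) (i l : nat) : R :=
  fsum n (fun j => if Eff (sigma t) j i then a i j x y t * (x j l - x i l) else 0)
  + fsum k (fun j => if Elf (sigma t) j i then b i j x y t * (y j l - x i l) else 0)
  + w i t l.

(* |z(t)| with z(t) = (u_1(y(t),t),...,u_k(y(t),t), w_1(t),...,w_n(t)) *)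
Definition znorm (n k d : nat) (u : nat -> stack -> R -> vec) (w : nat -> R -> vec)
  (y : R -> stack) (t : R) : R :=
  sqrt (fsum k (fun j => fsum d (fun l => u j (y t) t l ^ 2))
        + fsum n (fun i => fsum d (fun l => w i t l ^ 2))).

(* Main.v *)
Require Import Defs.
From Stdlib Require Import Reals Lra Lia List ClassicalEpsilon Classical.
Open Scope R_scope.

Lemma fsum_ext m f g : (forall l, (l < m)%nat -> f l = g l) -> fsum m f = fsum m g.
Proof. induction m; simpl; intros H; auto. rewrite IHm by (intros; apply H; lia). rewrite (H m) by lia. auto. Qed.

Lemma fsum_plus m f g : fsum m (fun l => f l + g l) = fsum m f + fsum m g.
Proof. induction m; simpl; [lra|]. rewrite IHm. lra. Qed.

Lemma fsum_scal m c f : fsum m (fun l => c * f l) = c * fsum m f.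
Proof. induction m; simpl; [lra|]. rewrite IHm. lra. Qed.

Lemma fsum_zero m : fsum m (fun _ => 0) = 0.
Proof. induction m; simpl; [lra|]. rewrite IHm. lra. Qed.

Lemma fsum_minus m f g : fsum m (fun l => f l - g l) = fsum m f - fsum m g.
Proof. induction m; simpl; [lra|]. rewrite IHm. lra. Qed.

Lemma fsum_le m f g : (forall l, (l < m)%nat -> f l <= g l) -> fsum m f <= fsum m g.
Proof. induction m; simpl; intros H; [lra|]. assert (f m <= g m) by (apply H; lia).
  assert (fsum m f <= fsum m g) by (apply IHm; intros; apply H; lia). lra. Qed.

Lemma fsum_nonneg m f : (forall l, (l < m)%nat -> 0 <= f l) -> 0 <= fsum m f.
Proof. intros H. rewrite <- (fsum_zero m). apply fsum_le. auto. Qed.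

Lemma fsum_const_le m f c : (forall l, (l < m)%nat -> f l <= c) -> fsum m f <= INR m * c.
Proof. induction m; intros H; [simpl; lra|]. cbn [fsum]. assert (f m <= c) by (apply H; lia).
  assert (fsum m f <= INR m * c) by (apply IHm; intros; apply H; lia).
  rewrite S_INR. lra. Qed.

Lemma fsum_elem_le m f j : (forall l, (l < m)%nat -> 0 <= f l) -> (j < m)%nat -> f j <= fsum m f.
Proof. induction m; simpl; intros H Hj; [lia|].
  assert (0 <= fsum m f) by (apply fsum_nonneg; intros; apply H; lia).
  destruct (Nat.eq_dec j m). subst. lra.
  assert (f j <= fsum m f) by (apply IHm; [intros; apply H; lia | lia]).
  assert (0 <= f m) by (apply H; lia). lra. Qed.

Lemma fsum_nonpos_elem m f j : (forall l, (l < m)%nat -> f l <= 0) -> (j < m)%nat -> fsum m f <= f j.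
Proof. intros H Hj.
  assert (- f j <= fsum m (fun l => - f l)).
  { apply (fsum_elem_le m (fun l => - f l)); auto. intros; specialize (H l H0); lra. }
  replace (fsum m (fun l => - f l)) with (-1 * fsum m f) in H0.
  lra. rewrite <- fsum_scal. apply fsum_ext; intros; lra. Qed.

Lemma fsum_swap m p (F : nat -> nat -> R) :
  fsum m (fun a => fsum p (fun b => F a b)) = fsum p (fun b => fsum m (fun a => F a b)).
Proof. induction m; simpl. rewrite fsum_zero; auto.
  rewrite IHm. rewrite <- fsum_plus. auto. Qed.

Lemma fsum_delta m j (c : R) : (j < m)%nat ->
  fsum m (fun l => if Nat.eq_dec l j then c else 0) = c.
Proof. induction m; simpl; intros H; [lia|].
  destruct (Nat.eq_dec m j).
  - subst. rewrite (fsum_ext j _ (fun _ => 0)). rewrite fsum_zero. lra.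
    intros. destruct (Nat.eq_dec l j); [lia|auto].
  - rewrite IHm by lia. lra. Qed.

Fixpoint mx (m : nat) (f : nat -> R) : R :=
  match m with O => f O | S m' => Rmax (mx m' f) (f m') end.

Lemma mx_ge m f j : (j < m)%nat \/ j = O -> f j <= mx m f.
Proof. induction m; simpl; intros H.
  - destruct H; [lia|subst; lra].
  - destruct (Nat.eq_dec j m). subst. apply Rmax_r.
    eapply Rle_trans; [apply IHm | apply Rmax_l]. lia. Qed.

Lemma mx_att m f : exists j, ((j < m)%nat \/ j = O) /\ mx m f = f j.
Proof. induction m; simpl.
  - exists O; auto.
  - destruct IHm as [j [Hj E]]. destruct (Rle_dec (mx m f) (f m)).
    + exists m; split; [lia|]. rewrite Rmax_right; auto.
    + exists j; split; [lia|]. rewrite Rmax_left; lra. Qed.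

Definition contI (al T : R) (f : R -> R) : Prop :=
  forall t, al <= t <= T -> forall eps, eps > 0 -> exists delta, delta > 0 /\
    forall s, al <= s <= T -> Rabs (s - t) < delta -> Rabs (f s - f t) < eps.

Lemma contI_plus al T f g : contI al T f -> contI al T g -> contI al T (fun t => f t + g t).
Proof. intros Hf Hg t Ht eps He.
  destruct (Hf t Ht (eps/2)) as [d1 [Hd1 H1]]; [lra|].
  destruct (Hg t Ht (eps/2)) as [d2 [Hd2 H2]]; [lra|].
  exists (Rmin d1 d2); split. apply Rmin_pos; auto.
  intros s Hs Hd. specialize (H1 s Hs). specialize (H2 s Hs).
  assert (Rabs (s - t) < d1) by (eapply Rlt_le_trans; [apply Hd | apply Rmin_l]).
  assert (Rabs (s - t) < d2) by (eapply Rlt_le_trans; [apply Hd | apply Rmin_r]).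
  specialize (H1 H). specialize (H2 H0).
  replace (f s + g s - (f t + g t)) with ((f s - f t) + (g s - g t)) by ring.
  eapply Rle_lt_trans; [apply Rabs_triang|]. lra. Qed.

Lemma contI_scal al T c f : contI al T f -> contI al T (fun t => c * f t).
Proof. intros Hf t Ht eps He.
  destruct (Hf t Ht (eps / (Rabs c + 1))) as [d [Hd H]].
  { apply Rdiv_lt_0_compat; auto. pose proof (Rabs_pos c); lra. }
  exists d; split; auto. intros s Hs Hds. specialize (H s Hs Hds).
  replace (c * f s - c * f t) with (c * (f s - f t)) by ring. rewrite Rabs_mult.
  pose proof (Rabs_pos c). pose proof (Rabs_pos (f s - f t)).
  assert (Rabs (f s - f t) * (Rabs c + 1) < eps).
  { apply (Rmult_lt_compat_r (Rabs c + 1)) in H; [|lra].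
    unfold Rdiv in H. rewrite Rmult_assoc, Rinv_l in H; lra. }
  nra. Qed.

Lemma contI_const al T c : contI al T (fun _ => c).
Proof. intros t Ht eps He. exists 1; split; [lra|]. intros. rewrite Rminus_diag, Rabs_R0; lra. Qed.

Lemma contI_ext al T f g : (forall t, al <= t <= T -> f t = g t) -> contI al T f -> contI al T g.
Proof. intros E Hf t Ht eps He. destruct (Hf t Ht eps He) as [d [Hd H]]. exists d; split; auto.
  intros s Hs Hds. rewrite <- !E by auto. auto. Qed.

Lemma contI_minus al T f g : contI al T f -> contI al T g -> contI al T (fun t => f t - g t).
Proof. intros Hf Hg. apply (contI_ext al T (fun t => f t + (-1) * g t)).
  intros; ring. apply contI_plus; auto. apply contI_scal; auto. Qed.

Lemma contI_fsum al T m (F : nat -> R -> R) : (forall l, (l < m)%nat -> contI al T (F l)) ->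
  contI al T (fun t => fsum m (fun l => F l t)).
Proof. induction m; simpl; intros H. apply contI_const.
  apply (contI_plus al T (fun t => fsum m (fun l => F l t)) (F m)).
  apply IHm; intros; apply H; lia. apply H; lia. Qed.

Lemma contI_of_nonneg al T f : 0 <= al -> cont_nonneg f -> contI al T f.
Proof. intros H0 Hf t Ht eps He. destruct (Hf t ltac:(lra) eps He) as [d [Hd H]].
  exists d; split; auto. intros s Hs Hds. apply H; auto; lra. Qed.

Lemma contI_of_deriv al T f f' : (forall t, derivable_pt_lim f t (f' t)) -> contI al T f.
Proof. intros Hd t Ht eps He.
  assert (C : continuity_pt f t).
  { apply derivable_continuous_pt. exists (f' t). apply Hd. }
  destruct (C eps He) as [d [Hd' H]]. exists d; split; auto.
  intros s Hs Hds. destruct (Req_dec t s) as [E|E].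
  subst; rewrite Rminus_diag, Rabs_R0; lra.
  apply (H s). split. split; [constructor|auto]. apply Hds. Qed.

Lemma contI_sub al T al' T' f : al <= al' -> T' <= T -> contI al T f -> contI al' T' f.
Proof. intros H1 H2 Hf t Ht eps He. destruct (Hf t ltac:(lra) eps He) as [d [Hd H]].
  exists d; split; auto. intros s Hs Hds. apply H; auto; lra. Qed.

Lemma Rmax_lip a b a' b' : Rabs (Rmax a b - Rmax a' b') <= Rmax (Rabs (a - a')) (Rabs (b - b')).
Proof. set (M := Rmax (Rabs (a - a')) (Rabs (b - b'))).
  assert (Rabs (a - a') <= M) by apply Rmax_l. assert (Rabs (b - b') <= M) by apply Rmax_r.
  pose proof (Rle_abs (a - a')). pose proof (Rle_abs (b - b')).
  pose proof (Rle_abs (-(a - a'))). pose proof (Rle_abs (-(b - b'))).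
  rewrite Rabs_Ropp in H3, H4.
  clearbody M. apply Rabs_le. unfold Rmax. destruct (Rle_dec a b) as [r1|r1]; destruct (Rle_dec a' b') as [r2|r2];
  try apply Rnot_le_lt in r1; try apply Rnot_le_lt in r2; lra. Qed.

Lemma contI_max al T f g : contI al T f -> contI al T g -> contI al T (fun t => Rmax (f t) (g t)).
Proof. intros Hf Hg t Ht eps He.
  destruct (Hf t Ht eps He) as [d1 [Hd1 H1]]. destruct (Hg t Ht eps He) as [d2 [Hd2 H2]].
  exists (Rmin d1 d2); split. apply Rmin_pos; auto.
  intros s Hs Hd.
  assert (Rabs (s - t) < d1) by (eapply Rlt_le_trans; [apply Hd | apply Rmin_l]).
  assert (Rabs (s - t) < d2) by (eapply Rlt_le_trans; [apply Hd | apply Rmin_r]).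
  eapply Rle_lt_trans; [apply Rmax_lip|]. apply Rmax_lub_lt; auto. Qed.

Lemma finite_delta (m : nat) (P : nat -> R -> Prop) :
  (forall j d d', 0 < d' <= d -> P j d -> P j d') ->
  (forall j, (j < m)%nat -> exists d, d > 0 /\ P j d) ->
  exists d, d > 0 /\ forall j, (j < m)%nat -> P j d.
Proof. intros Hmon. induction m; intros H.
  - exists 1; split; [lra|]; intros; lia.
  - destruct IHm as [d1 [Hd1 H1]]. intros; apply H; lia.
    destruct (H m ltac:(lia)) as [d2 [Hd2 H2]].
    exists (Rmin d1 d2); split. apply Rmin_pos; auto.
    intros j Hj. destruct (Nat.eq_dec j m).
    + subst. apply (Hmon m d2). split. apply Rmin_pos; auto. apply Rmin_r. auto.
    + apply (Hmon j d1). split. apply Rmin_pos; auto. apply Rmin_l. apply H1; lia. Qed.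

Lemma barrier (m : nat) (g : nat -> R -> R) (al T : R) :
  al <= T ->
  (forall j, (j < m)%nat -> contI al T (g j)) ->
  (forall j, (j < m)%nat -> 0 < g j al) ->
  (forall ts j, al < ts <= T -> (j < m)%nat -> g j ts <= 0 ->
      (forall xi j', al <= xi < ts -> (j' < m)%nat -> 0 < g j' xi) -> False) ->
  forall t j, al <= t <= T -> (j < m)%nat -> 0 < g j t.
Proof.
  intros HaT Hc H0 LC t j Ht Hj.
  destruct (Rlt_le_dec 0 (g j t)) as [ok|bad]; auto. exfalso.
  set (G := fun s => al <= s <= T /\ forall tau, al <= tau <= s -> forall j', (j' < m)%nat -> 0 < g j' tau).
  assert (Gal : G al). { split; [lra|]. intros tau Htau j' Hj'. replace tau with al by lra. auto. }
  assert (Gb : bound G). { exists T. intros s [Hs _]. lra. }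
  destruct (completeness G Gb (ex_intro _ al Gal)) as [ts [Hub Hlub]].
  assert (Hts1 : al <= ts) by (apply Hub; auto).
  assert (Hts2 : ts <= T). { apply Hlub. intros s [Hs _]. lra. }
  assert (F1 : forall tau, al <= tau < ts -> forall j', (j' < m)%nat -> 0 < g j' tau).
  { intros tau Htau j' Hj'.
    destruct (classic (exists s, G s /\ tau < s)) as [[s [[Hs1 Hs2] Hs3]]|Hn].
    - apply Hs2; auto; lra.
    - exfalso. assert (ts <= tau). { apply Hlub. intros s Hs.
        destruct (Rle_lt_dec s tau); auto. exfalso; apply Hn; exists s; auto. } lra. }
  destruct (classic (forall j', (j' < m)%nat -> 0 < g j' ts)) as [A|B].
  - destruct (finite_delta m (fun j d => forall s, al <= s <= T -> Rabs (s - ts) < d -> 0 < g j s))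
      as [d [Hd P]].
    { intros j0 d0 d' Hd' P0 s Hs Hds. apply P0; auto; lra. }
    { intros j0 Hj0. destruct (Hc j0 Hj0 ts ltac:(lra) (g j0 ts) (A j0 Hj0)) as [d [Hd P]].
      exists d; split; auto. intros s Hs Hds. specialize (P s Hs Hds).
      apply Rabs_def2 in P. lra. }
    destruct (Rlt_le_dec ts T) as [lt|ge].
    + set (s' := Rmin (ts + d/2) T).
      assert (s' <= T) by apply Rmin_r.
      assert (ts < s'). { unfold s'. apply Rmin_glb_lt; lra. }
      assert (s' <= ts + d/2) by apply Rmin_l.
      assert (G s'). { split; [lra|]. intros tau Htau j' Hj'.
        destruct (Rlt_le_dec tau ts). apply F1; auto; lra.
        apply P; auto. lra. rewrite Rabs_right; lra. }
      assert (s' <= ts) by (apply Hub; auto). lra.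
    + destruct (Rlt_le_dec t ts). assert (0 < g j t) by (apply F1; auto; lra). lra.
      replace t with ts in bad by lra. specialize (A j Hj). lra.
  - apply not_all_ex_not in B. destruct B as [j' B].
    apply imply_to_and in B. destruct B as [Hj' B]. apply Rnot_lt_le in B.
    destruct (Req_dec ts al) as [E|E].
    + rewrite E in B. specialize (H0 j' Hj'). lra.
    + apply (LC ts j'); auto. lra. Qed.

Lemma lc_deriv (al T ts : R) (g g' : R -> R) :
  al < ts <= T -> contI al T g -> g ts <= 0 -> (forall xi, al <= xi < ts -> 0 < g xi) ->
  (exists s0, s0 < ts /\ forall xi, s0 < xi < ts -> derivable_pt_lim g xi (g' xi) /\ 0 < g' xi) -> False.
Proof.
  intros Hts Hc Hg Hpos [s0 [Hs0 Hd]].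
  set (s1 := (Rmax s0 al + ts) / 2).
  assert (s0 <= Rmax s0 al) by apply Rmax_l. assert (al <= Rmax s0 al) by apply Rmax_r.
  assert (Rmax s0 al < ts) by (apply Rmax_lub_lt; lra).
  assert (Hs1 : Rmax s0 al < s1 < ts) by (unfold s1; lra).
  assert (Hg1 : 0 < g s1) by (apply Hpos; lra).
  destruct (Hc ts ltac:(lra) (g s1 - g ts) ltac:(lra)) as [d [Hdd P]].
  set (s2 := Rmax (ts - d/2) ((s1 + ts)/2)).
  assert (ts - d/2 <= s2) by apply Rmax_l. assert ((s1 + ts)/2 <= s2) by apply Rmax_r.
  assert (s2 < ts) by (apply Rmax_lub_lt; lra).
  assert (Hg2 : g s2 < g s1).
  { assert (Q : Rabs (g s2 - g ts) < g s1 - g ts). apply P. lra. rewrite Rabs_left; lra.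
    apply Rabs_def2 in Q. lra. }
  destruct (MVT_cor2 g g' s1 s2) as [c [Ec Hc']]. lra.
  { intros c Hc'. apply Hd. lra. }
  assert (0 < g' c) by (apply Hd; lra).
  assert (0 < g' c * (s2 - s1)) by (apply Rmult_lt_0_compat; lra). lra. Qed.

Lemma list_below (l : list R) (ts : R) : exists s, s < ts /\ forall x, In x l -> x < ts -> x <= s.
Proof. induction l as [|a l IH].
  - exists (ts - 1); split; [lra|]. intros x [].
  - destruct IH as [s [Hs H]]. destruct (Rlt_le_dec a ts).
    + exists (Rmax s a); split. apply Rmax_lub_lt; auto.
      intros x [E|Hx] Hxt. subst; apply Rmax_r. eapply Rle_trans; [apply H; auto| apply Rmax_l].
    + exists s; split; auto. intros x [E|Hx] Hxt. subst; lra. auto. Qed.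

Lemma avoid (E : R -> Prop) : loc_finite E -> forall ts, exists s, s < ts /\
  forall xi, s < xi < ts -> 0 <= xi -> ~ E xi.
Proof. intros HE ts. destruct (HE ts) as [l Hl]. destruct (list_below l ts) as [s [Hs H]].
  exists s; split; auto. intros xi Hxi H0 Exi. specialize (Hl xi Exi H0 ltac:(lra)).
  specialize (H xi Hl ltac:(lra)). lra. Qed.

Definition dot (d : nat) (e v : vec) : R := fsum d (fun l => e l * v l).
Definition sq (d : nat) (v : vec) : R := fsum d (fun l => v l ^ 2).
Definition psi (k d : nat) (e : vec) (Y : stack) : R := mx k (fun j => dot d e (Y j)).

Lemma fsum_lin3 m a b c f g h :
  fsum m (fun l => a * f l + b * g l + c * h l) = a * fsum m f + b * fsum m g + c * fsum m h.
Proof. rewrite !fsum_plus, !fsum_scal. auto. Qed.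

Lemma Rinf_glb (S : R -> Prop) : (exists s, S s) -> (forall s, S s -> 0 <= s) -> is_glb S (Rinf S).
Proof. intros [s0 Hs0] Hlb.
  assert (Ex : exists r, is_glb S r).
  { set (S' := fun r => S (- r)).
    assert (Bd : bound S'). { exists 0. intros r Hr. unfold S' in Hr. specialize (Hlb _ Hr). lra. }
    assert (Ne : exists r, S' r). { exists (- s0). unfold S'. rewrite Ropp_involutive. auto. }
    destruct (completeness S' Bd Ne) as [m [Hub Hl]].
    exists (- m). split.
    - intros s Hs. assert (- s <= m). { apply Hub. unfold S'. rewrite Ropp_involutive; auto. } lra.
    - intros b Hb. assert (m <= - b). { apply Hl. intros r Hr. unfold S' in Hr. specialize (Hb _ Hr). lra. }
      lra. }
  unfold Rinf. apply (epsilon_spec (inhabits 0) (fun r => is_glb S r) Ex). Qed.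

Definition HS k d Y (v : vec) := fun r => exists p, in_hull k d Y p /\ r = enorm d (fun l => v l - p l).

Lemma in_hull_vertex k d Y j : (j < k)%nat -> in_hull k d Y (Y j).
Proof. intros Hj. exists (fun m => if Nat.eq_dec m j then 1 else 0). split; [|split].
  - intros m _. destruct (Nat.eq_dec m j); lra.
  - apply fsum_delta; auto.
  - intros l _. rewrite (fsum_ext k _ (fun m => if Nat.eq_dec m j then Y j l else 0)).
    rewrite fsum_delta; auto. intros m _. destruct (Nat.eq_dec m j). subst; ring. ring. Qed.

Lemma dist_glb k d Y v : (1 <= k)%nat -> is_glb (HS k d Y v) (dist_hull k d Y v).
Proof. intros Hk. apply Rinf_glb.
  - exists (enorm d (fun l => v l - Y O l)). exists (Y O). split; auto. apply in_hull_vertex; lia.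
  - intros s [p [_ E]]. subst. apply sqrt_pos. Qed.

Lemma dist_nonneg k d Y v : (1 <= k)%nat -> 0 <= dist_hull k d Y v.
Proof. intros Hk. destruct (dist_glb k d Y v Hk) as [_ H]. apply H.
  intros s [p [_ E]]. subst. apply sqrt_pos. Qed.

Lemma dist_le k d Y v p : (1 <= k)%nat -> in_hull k d Y p -> dist_hull k d Y v <= enorm d (fun l => v l - p l).
Proof. intros Hk Hp. destruct (dist_glb k d Y v Hk) as [H _]. apply H. exists p; auto. Qed.

Lemma dist_approx k d Y v eps : (1 <= k)%nat -> eps > 0 ->
  exists p, in_hull k d Y p /\ enorm d (fun l => v l - p l) < dist_hull k d Y v + eps.
Proof. intros Hk He. destruct (dist_glb k d Y v Hk) as [H1 H2].
  destruct (classic (exists p, in_hull k d Y p /\ enorm d (fun l => v l - p l) < dist_hull k d Y v + eps)) as [ok|no]; auto.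
  exfalso. assert (dist_hull k d Y v + eps <= dist_hull k d Y v). apply H2.
  intros s [p [Hp E]]. subst. destruct (Rle_lt_dec (dist_hull k d Y v + eps) (enorm d (fun l => v l - p l))); auto.
  exfalso; apply no; exists p; auto. lra. Qed.

Lemma sq_nonneg d v : 0 <= sq d v.
Proof. apply fsum_nonneg. intros. apply pow2_ge_0. Qed.

Lemma cs_lemma d e w : sq d e <= 1 -> dot d e w <= enorm d w.
Proof. intros He.
  assert (K : forall lam, lam > 0 -> 2 * lam * dot d e w <= lam ^ 2 + sq d w).
  { intros lam Hl. assert (0 <= fsum d (fun l => (lam * e l - w l) ^ 2)).
    apply fsum_nonneg; intros; apply pow2_ge_0.
    rewrite (fsum_ext d _ (fun l => (lam^2) * (e l ^ 2) + (-2 * lam) * (e l * w l) + 1 * (w l ^ 2))) in H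
      by (intros; ring).
    rewrite fsum_lin3 in H. fold (sq d e) (dot d e w) (sq d w) in H.
    assert (lam ^ 2 * sq d e <= lam ^ 2). { assert (0 < lam ^ 2) by (apply pow_lt; auto). nra. }
    lra. }
  unfold enorm. fold (sq d w). set (N := sqrt (sq d w)).
  assert (N2 : N * N = sq d w) by (apply sqrt_sqrt, sq_nonneg).
  assert (0 <= N) by apply sqrt_pos.
  destruct (Rlt_le_dec 0 N).
  - specialize (K N r). simpl in K. rewrite <- N2 in K. nra.
  - assert (N = 0) by lra. rewrite H0 in N2.
    destruct (Rle_lt_dec (dot d e w) 0). lra.
    specialize (K (dot d e w) r0). simpl in K. nra. Qed.

Lemma dot_minus d e v p : dot d e (fun l => v l - p l) = dot d e v - dot d e p.
Proof. unfold dot. rewrite <- fsum_minus. apply fsum_ext; intros; ring. Qed.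

Lemma dot_le_psi k d e Y p : (1 <= k)%nat -> in_hull k d Y p -> dot d e p <= psi k d e Y.
Proof. intros Hk [lam [Hl1 [Hl2 Hl3]]]. unfold dot.
  rewrite (fsum_ext d _ (fun l => fsum k (fun j => e l * (lam j * Y j l)))).
  2:{ intros l Hl. rewrite Hl3 by auto. rewrite <- fsum_scal. auto. }
  rewrite fsum_swap.
  rewrite (fsum_ext k _ (fun j => lam j * dot d e (Y j))).
  2:{ intros j _. unfold dot. rewrite <- fsum_scal. apply fsum_ext; intros; ring. }
  apply Rle_trans with (fsum k (fun j => lam j * psi k d e Y)).
  apply fsum_le. intros j Hj. apply Rmult_le_compat_l; auto. unfold psi. apply (mx_ge k (fun j => dot d e (Y j))); auto.
  rewrite (fsum_ext k _ (fun j => psi k d e Y * lam j)) by (intros; ring).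
  rewrite fsum_scal, Hl2. lra. Qed.

Lemma dual_lower k d e Y v : (1 <= k)%nat -> sq d e <= 1 -> dot d e v - psi k d e Y <= dist_hull k d Y v.
Proof. intros Hk He. destruct (dist_glb k d Y v Hk) as [_ H]. apply H.
  intros s [p [Hp E]]. subst. pose proof (dot_le_psi k d e Y p Hk Hp).
  pose proof (cs_lemma d e (fun l => v l - p l) He). rewrite dot_minus in H1. lra. Qed.

Lemma Rabs_fsum m f : Rabs (fsum m f) <= fsum m (fun l => Rabs (f l)).
Proof. induction m; simpl. rewrite Rabs_R0; lra.
  eapply Rle_trans; [apply Rabs_triang|]. lra. Qed.

Lemma sq_le_of_abs x y : Rabs x <= y -> x ^ 2 <= y ^ 2.
Proof. intros H. rewrite <- pow2_abs. apply pow_incr. split; auto. apply Rabs_pos. Qed.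

Lemma psi_zero k d Y : psi k d (fun _ => 0) Y = 0.
Proof. unfold psi. destruct (mx_att k (fun j => dot d (fun _ => 0) (Y j))) as [j [_ E]].
  rewrite E. unfold dot. rewrite (fsum_ext d _ (fun _ => 0)) by (intros; ring). apply fsum_zero. Qed.

Lemma dual_upper k d Y v delta : (1 <= k)%nat -> delta > 0 ->
  exists e, sq d e <= 1 /\ dist_hull k d Y v <= dot d e v - psi k d e Y + delta.
Proof.
  intros Hk Hdel. set (D := dist_hull k d Y v).
  assert (HD : 0 <= D) by (apply dist_nonneg; auto).
  set (R0 := fsum d (fun l => (2 * fsum k (fun m => Rabs (Y m l))) ^ 2) + 1).
  assert (HR0 : 1 <= R0). { unfold R0. assert (0 <= fsum d (fun l => (2 * fsum k (fun m => Rabs (Y m l))) ^ 2)).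
    apply fsum_nonneg; intros; apply pow2_ge_0. lra. }
  set (s := Rmin 1 (delta ^ 2 / R0)).
  assert (Hd2 : 0 < delta ^ 2) by (apply pow_lt; auto).
  assert (Hs0 : 0 < s). { apply Rmin_pos. lra. apply Rdiv_lt_0_compat; lra. }
  assert (Hs1 : s <= 1) by apply Rmin_l.
  assert (HsR : s * R0 <= delta ^ 2).
  { assert (s <= delta ^ 2 / R0) by apply Rmin_r.
    apply (Rmult_le_compat_r R0) in H; [|lra]. unfold Rdiv in H. rewrite Rmult_assoc, Rinv_l in H; lra. }
  set (e1 := Rmin 1 (s * delta ^ 2 / (2 * D + 1))).
  assert (He10 : 0 < e1). { apply Rmin_pos. lra. apply Rdiv_lt_0_compat. nra. lra. }
  assert (He11 : e1 <= 1) by apply Rmin_l.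
  assert (He1D : e1 * (2 * D + 1) <= s * delta ^ 2).
  { assert (e1 <= s * delta ^ 2 / (2 * D + 1)) by apply Rmin_r.
    apply (Rmult_le_compat_r (2 * D + 1)) in H; [|lra]. unfold Rdiv in H.
    rewrite Rmult_assoc, Rinv_l in H; lra. }
  destruct (dist_approx k d Y v e1 Hk He10) as [p [Hp Hr]]. fold D in Hr.
  set (w := fun l => v l - p l). fold w in Hr.
  set (r := enorm d w). fold r in Hr.
  assert (Hr0 : 0 <= r) by apply sqrt_pos.
  assert (Hrr : r * r = sq d w) by (apply sqrt_sqrt, sq_nonneg).
  assert (HDr : D <= r) by (apply dist_le; auto).
  destruct (Rle_lt_dec r delta) as [small|big].
  - exists (fun _ => 0). split.
    + unfold sq. rewrite (fsum_ext d _ (fun _ => 0)) by (intros; ring). rewrite fsum_zero; lra.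
    + rewrite psi_zero. unfold dot. rewrite (fsum_ext d _ (fun _ => 0)) by (intros; ring).
      rewrite fsum_zero. lra.
  -
    assert (KEY : forall j, (j < k)%nat -> dot d w (fun l => Y j l - p l) < delta ^ 2).
    { intros j Hj. set (h := fun l => Y j l - p l).
      destruct Hp as [lam [Hl1 [Hl2 Hl3]]].
      set (lam' := fun m => (1 - s) * lam m + s * (if Nat.eq_dec m j then 1 else 0)).
      set (p' := fun l => p l + s * h l).
      assert (Hp' : in_hull k d Y p').
      { exists lam'. split; [|split].
        - intros m Hm. unfold lam'. specialize (Hl1 m Hm). destruct (Nat.eq_dec m j); nra.
        - unfold lam'. rewrite fsum_plus, !fsum_scal, fsum_delta, Hl2 by auto. ring.
        - intros l Hl. unfold p', h, lam'.
          rewrite (fsum_ext k _ (fun m => (1 - s) * (lam m * Y m l) + s * (if Nat.eq_dec m j then Y j l else 0))).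
          rewrite fsum_plus, !fsum_scal, fsum_delta by auto. rewrite <- Hl3 by auto. ring.
          intros m _. destruct (Nat.eq_dec m j). subst; ring. ring. }
      pose proof (dist_le k d Y v p' Hk Hp') as H1. fold D in H1.
      assert (E1 : sq d (fun l => v l - p' l) = 1 * sq d w + (-2 * s) * dot d w h + (s ^ 2) * sq d h).
      { unfold sq, dot. rewrite <- fsum_lin3. apply fsum_ext. intros. unfold p', w, h. ring. }
      assert (D * D <= sq d (fun l => v l - p' l)).
      { unfold enorm in H1. fold (sq d (fun l => v l - p' l)) in H1.
        pose proof (sq_nonneg d (fun l => v l - p' l)).
        pose proof (sqrt_sqrt _ H). pose proof (sqrt_pos (sq d (fun l => v l - p' l))). nra. }
      assert (Hh : sq d h <= R0 - 1).
      { unfold sq, R0. ring_simplify. apply fsum_le. intros l Hl. apply sq_le_of_abs.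
        unfold h. rewrite Hl3 by auto.
        assert (A1 : Rabs (Y j l) <= fsum k (fun m => Rabs (Y m l))).
        { apply (fsum_elem_le k (fun m => Rabs (Y m l))); auto. intros; apply Rabs_pos. }
        assert (A2 : Rabs (fsum k (fun m => lam m * Y m l)) <= fsum k (fun m => Rabs (Y m l))).
        { eapply Rle_trans; [apply Rabs_fsum|]. apply fsum_le. intros m Hm. rewrite Rabs_mult.
          assert (lam m <= 1). { rewrite <- Hl2. apply fsum_elem_le; auto. }
          rewrite (Rabs_right (lam m)) by (apply Rle_ge; auto).
          pose proof (Rabs_pos (Y m l)). specialize (Hl1 m Hm). nra. }
        eapply Rle_trans; [apply Rabs_triang|]. rewrite Rabs_Ropp. lra. }
      assert (r * r < D * D + s * delta ^ 2).
      { assert (r < D + e1) by auto. assert (r * r < (D + e1) * (D + e1)) by nra. nra. }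
      assert (0 <= sq d h) by apply sq_nonneg.
      assert (s ^ 2 * sq d h <= s * delta ^ 2).
      { assert (s * sq d h <= delta ^ 2) by nra. simpl. nra. }
      assert (2 * s * dot d w h < 2 * s * delta ^ 2) by nra.
      nra. }
    set (e := fun l => w l / r).
    assert (Hrpos : 0 < r) by lra.
    assert (Edot : forall u, dot d e u = dot d w u / r).
    { intros u. unfold dot, e, Rdiv. rewrite Rmult_comm, <- fsum_scal. apply fsum_ext; intros; ring. }
    exists e. split.
    + unfold sq, e. rewrite (fsum_ext d _ (fun l => (/ r ^ 2) * (w l ^ 2))).
      rewrite fsum_scal. fold (sq d w). rewrite <- Hrr. simpl. field_simplify; lra.
      intros; field; lra.
    + destruct (mx_att k (fun j => dot d e (Y j))) as [j1 [Hj1 E]].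
      assert (Hj1' : (j1 < k)%nat) by lia.
      unfold psi. rewrite E.
      assert (dot d e (Y j1) - dot d e p < delta).
      { rewrite <- dot_minus, Edot. specialize (KEY j1 Hj1').
        apply (Rmult_lt_reg_r r); auto. unfold Rdiv. rewrite Rmult_assoc, Rinv_l by lra. simpl in KEY |- *. nra. }
      assert (dot d e v - dot d e p = r).
      { rewrite <- dot_minus, Edot. fold w. unfold dot. fold (sq d w) . 
        replace (fsum d (fun l => w l * w l)) with (sq d w). rewrite <- Hrr. field; lra.
        unfold sq. apply fsum_ext; intros; ring. }
      lra.
Qed.

Lemma dpl_ext f g x l : (forall t, f t = g t) -> derivable_pt_lim f x l -> derivable_pt_lim g x l.
Proof. intros E H eps He. destruct (H eps He) as [d Hd]. exists d. intros h Hh Hh'.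
  rewrite <- !E. apply Hd; auto. Qed.

Lemma dpl_plus f g x a b : derivable_pt_lim f x a -> derivable_pt_lim g x b ->
  derivable_pt_lim (fun t => f t + g t) x (a + b).
Proof. intros. exact (derivable_pt_lim_plus f g x a b H H0). Qed.

Lemma dpl_minus f g x a b : derivable_pt_lim f x a -> derivable_pt_lim g x b ->
  derivable_pt_lim (fun t => f t - g t) x (a - b).
Proof. intros. exact (derivable_pt_lim_minus f g x a b H H0). Qed.

Lemma dpl_scal c f x a : derivable_pt_lim f x a -> derivable_pt_lim (fun t => c * f t) x (c * a).
Proof. intros. exact (derivable_pt_lim_scal f c x a H). Qed.

Lemma dpl_const c x : derivable_pt_lim (fun _ => c) x 0.
Proof. exact (derivable_pt_lim_const c x). Qed.

Lemma dpl_id x : derivable_pt_lim (fun t => t) x 1.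
Proof. exact (derivable_pt_lim_id x). Qed.

Lemma dpl_fsum m (F : nat -> R -> R) (F' : nat -> R) x :
  (forall l, (l < m)%nat -> derivable_pt_lim (F l) x (F' l)) ->
  derivable_pt_lim (fun t => fsum m (fun l => F l t)) x (fsum m F').
Proof. induction m; simpl; intros H. apply dpl_const.
  apply dpl_plus. apply IHm; intros; apply H; lia. apply H; lia. Qed.

Lemma dpl_dot d e (X : R -> vec) (V : vec) x :
  (forall l, (l < d)%nat -> derivable_pt_lim (fun s => X s l) x (V l)) ->
  derivable_pt_lim (fun s => dot d e (X s)) x (dot d e V).
Proof. intros H. unfold dot. apply (dpl_fsum d (fun l t => e l * X t l) (fun l => e l * V l)).
  intros l Hl. apply dpl_scal. auto. Qed.

Lemma dpl_explin al be x : derivable_pt_lim (fun t => exp (al * t + be)) x (al * exp (al * x + be)).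
Proof. assert (H : derivable_pt_lim (fun t => al * t + be) x (al * 1 + 0)).
  { apply dpl_plus. apply dpl_scal, dpl_id. apply dpl_const. }
  pose proof (derivable_pt_lim_comp (fun t => al * t + be) exp x _ _ H (derivable_pt_lim_exp _)).
  unfold comp in H0. replace (al * exp (al * x + be)) with (exp (al * x + be) * (al * 1 + 0)) by ring.
  exact H0. Qed.

Lemma contI_id al T : contI al T (fun t => t).
Proof. apply (contI_of_deriv al T (fun t => t) (fun _ => 1)). intros; apply dpl_id. Qed.

Lemma contI_dot al T d e (X : R -> vec) : 0 <= al ->
  (forall l, (l < d)%nat -> cont_nonneg (fun t => X t l)) -> contI al T (fun t => dot d e (X t)).
Proof. intros H0 H. unfold dot. apply (contI_fsum al T d (fun l t => e l * X t l)).
  intros l Hl. apply contI_scal. apply contI_of_nonneg; auto. Qed.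

Lemma fmax_ge m f j : (j < m)%nat -> f j <= fmax m f.
Proof. induction m; simpl; intros H; [lia|]. destruct (Nat.eq_dec j m). subst; apply Rmax_r.
  eapply Rle_trans; [apply IHm; lia|apply Rmax_l]. Qed.

Lemma fmax_nonneg m f : 0 <= fmax m f.
Proof. induction m; simpl. lra. eapply Rle_trans; [apply IHm|apply Rmax_l]. Qed.

Lemma dot_opp d e v : dot d (fun l => - e l) v = - dot d e v.
Proof. unfold dot. replace (- fsum d (fun l => e l * v l)) with (-1 * fsum d (fun l => e l * v l)) by ring.
  rewrite <- fsum_scal. apply fsum_ext; intros; ring. Qed.

Lemma sq_opp d e : sq d (fun l => - e l) = sq d e.
Proof. unfold sq. apply fsum_ext; intros; ring. Qed.

Lemma dot_rhs d e n k Eff Elf sigma a b w X Y t m :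
  dot d e (fun l => follower_rhs n k Eff Elf sigma a b w X Y t m l) =
  fsum n (fun m' => if Eff (sigma t) m' m then a m m' X Y t * (dot d e (X m') - dot d e (X m)) else 0)
  + fsum k (fun j' => if Elf (sigma t) j' m then b m j' X Y t * (dot d e (Y j') - dot d e (X m)) else 0)
  + dot d e (w m t).
Proof. unfold dot, follower_rhs.
  rewrite (fsum_ext d _ (fun l =>
     fsum n (fun m' => e l * (if Eff (sigma t) m' m then a m m' X Y t * (X m' l - X m l) else 0))
   + fsum k (fun j' => e l * (if Elf (sigma t) j' m then b m j' X Y t * (Y j' l - X m l) else 0))
   + e l * w m t l)).
  2:{ intros l _. rewrite !fsum_scal. ring. }
  rewrite fsum_plus, fsum_plus.
  rewrite (fsum_swap d n), (fsum_swap d k). f_equal. f_equal.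
  - apply fsum_ext. intros m' _. destruct (Eff (sigma t) m' m).
    + rewrite <- fsum_minus, <- fsum_scal. apply fsum_ext; intros; ring.
    + rewrite (fsum_ext d _ (fun _ => 0)) by (intros; ring). apply fsum_zero.
  - apply fsum_ext. intros j' _. destruct (Elf (sigma t) j' m).
    + rewrite <- fsum_minus, <- fsum_scal. apply fsum_ext; intros; ring.
    + rewrite (fsum_ext d _ (fun _ => 0)) by (intros; ring). apply fsum_zero. Qed.

Lemma le_of_eps X Y C : C > 0 -> (forall eps, eps > 0 -> X < Y + C * eps) -> X <= Y.
Proof. intros HC H. destruct (Rle_lt_dec X Y); auto. exfalso.
  set (eps := (X - Y) / (2 * C)). assert (eps > 0) by (unfold eps; apply Rdiv_lt_0_compat; lra).
  specialize (H eps H0). unfold eps in H. field_simplify in H; lra. Qed.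

Lemma exp_le1 x : x <= 0 -> exp x <= 1.
Proof. intros H. destruct (Req_dec x 0). subst; rewrite exp_0; lra.
  rewrite <- exp_0. left. apply exp_increasing. lra. Qed.

Lemma dpl_aff_minus F F' xi al be ga t0 : derivable_pt_lim F xi F' ->
  derivable_pt_lim (fun t => al + be * (t - t0) + ga - F t) xi (be - F').
Proof. intros H. replace (be - F') with (0 + be * (1 - 0) + 0 - F') by ring.
  apply dpl_minus; auto. apply dpl_plus. apply dpl_plus. apply dpl_const.
  apply dpl_scal. apply dpl_minus. apply dpl_id. apply dpl_const. apply dpl_const. Qed.

Lemma contI_aff al T a0 be ga t0 : contI al T (fun t => a0 + be * (t - t0) + ga).
Proof. apply contI_plus. apply contI_plus. apply contI_const. apply contI_scal.
  apply contI_minus. apply contI_id. apply contI_const. apply contI_const. Qed.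

Definition mu_f (A bs tauD : R) (s : R) : R :=
  Rmax (1 - bs / (1 + (A + bs) * tauD) * s)
       (1 - bs / (1 + (A + bs) * tauD) * tauD * exp (- A * s + A * tauD)).

Lemma dpl_aff a0 be ga t0 xi : derivable_pt_lim (fun t => a0 + be * (t - t0) + ga) xi be.
Proof. pose proof (dpl_aff_minus (fun _ => 0) 0 xi a0 be ga t0 (dpl_const 0 xi)).
  replace (be - 0) with be in H by ring. eapply dpl_ext; [|apply H]. intros; simpl; ring. Qed.

Section Dyn.
Variables (n k d : nat) (astar_up bstar astar_lo tauD Tstar : R)
  (Eff Elf : nat -> nat -> nat -> bool) (sigma : R -> nat)
  (a b : nat -> nat -> stack -> stack -> R -> R) (u : nat -> stack -> R -> vec) (w : nat -> R -> vec)
  (x y : R -> stack) (Z t0 : R) (i j : nat) (E : R -> Prop) (e : vec) (eps : R).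
Hypotheses (Hn : (1 <= n)%nat) (Hk : (1 <= k)%nat) (Hb : 0 < bstar) (HtauD : 0 < tauD) (HT : tauD < Tstar)
  (Hlo : 0 < astar_lo) (Hlu : astar_lo <= astar_up)
  (Ha : forall i' j' X Y t, (i' < n)%nat -> (j' < n)%nat -> 0 <= t -> astar_lo <= a i' j' X Y t <= astar_up)
  (Hbb : forall i' j' X Y t, (i' < n)%nat -> (j' < k)%nat -> 0 <= t -> bstar <= b i' j' X Y t)
  (Hxc : forall i' l, (i' < n)%nat -> (l < d)%nat -> cont_nonneg (fun t => x t i' l))
  (Hyc : forall j' l, (j' < k)%nat -> (l < d)%nat -> cont_nonneg (fun t => y t j' l))
  (HEf : loc_finite E)
  (HEd : forall t, 0 < t -> ~ E t ->
         (forall j' l, (j' < k)%nat -> (l < d)%nat ->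
            derivable_pt_lim (fun s => y s j' l) t (u j' (y t) t l)) /\
         (forall i' l, (i' < n)%nat -> (l < d)%nat ->
            derivable_pt_lim (fun s => x s i' l) t
              (follower_rhs n k Eff Elf sigma a b w (x t) (y t) t i' l)))
  (HZ : is_lub (fun r => exists t, 0 <= t /\ r = znorm n k d u w y t) Z)
  (Ht0 : 0 <= t0) (Hi : (i < n)%nat) (Hj : (j < k)%nat)
  (Harc : forall t, t0 <= t -> t < t0 + tauD -> Elf (sigma t) j i = true)
  (He : sq d e <= 1) (Heps : eps > 0).

Definition T1 := t0 + Tstar.
Definition P0 := psi k d e (y t0).
Definition cc (t : R) := P0 + (Z + eps) * (t - t0) + eps.
Definition q (m : nat) (t : R) := dot d e (x t m) - cc t.
Definition Dq (m : nat) (t : R) :=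
  dot d e (fun l => follower_rhs n k Eff Elf sigma a b w (x t) (y t) t m l) - (Z + eps).
Definition AA := INR n * (Rabs astar_up + 1).
Definition KK := AA + bstar.
Definition c1 := bstar / (1 + KK * tauD).
Definition D0 := dist_state n k d (y t0) (x t0).

Lemma AA_pos : 1 <= AA.
Proof. unfold AA. assert (1 <= INR n) by (apply (le_INR 1); lia). pose proof (Rabs_pos astar_up). nra. Qed.

Lemma c1_facts : 0 < c1 /\ c1 * (1 + KK * tauD) = bstar /\ c1 * tauD < 1.
Proof. pose proof AA_pos. unfold c1, KK. assert (0 < 1 + (AA + bstar) * tauD) by nra.
  split. apply Rdiv_lt_0_compat; lra. split. field; lra.
  apply (Rmult_lt_reg_r (1 + (AA + bstar) * tauD)); auto.
  replace (bstar / (1 + (AA + bstar) * tauD) * tauD * (1 + (AA + bstar) * tauD)) with (bstar * tauD) by (field; lra).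
  nra. Qed.

Lemma D0_nonneg : 0 <= D0.
Proof. apply fmax_nonneg. Qed.

Lemma Z_bound t : 0 <= t -> znorm n k d u w y t <= Z.
Proof. intros H. destruct HZ as [H1 _]. apply H1. exists t; auto. Qed.

Lemma Z_nonneg : 0 <= Z.
Proof. eapply Rle_trans; [|apply (Z_bound 0); lra]. apply sqrt_pos. Qed.

Lemma u_bound j' t : (j' < k)%nat -> 0 <= t -> enorm d (u j' (y t) t) <= Z.
Proof. intros Hj' Ht. eapply Rle_trans; [|apply (Z_bound t Ht)]. unfold enorm, znorm.
  apply sqrt_le_1_alt.
  assert (fsum d (fun l => u j' (y t) t l ^ 2) <= fsum k (fun j0 => fsum d (fun l => u j0 (y t) t l ^ 2))).
  { apply (fsum_elem_le k (fun j0 => fsum d (fun l => u j0 (y t) t l ^ 2))); auto.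
    intros; apply fsum_nonneg; intros; apply pow2_ge_0. }
  assert (0 <= fsum n (fun i0 => fsum d (fun l => w i0 t l ^ 2))).
  { apply fsum_nonneg; intros; apply fsum_nonneg; intros; apply pow2_ge_0. }
  lra. Qed.

Lemma w_bound m t : (m < n)%nat -> 0 <= t -> enorm d (w m t) <= Z.
Proof. intros Hm Ht. eapply Rle_trans; [|apply (Z_bound t Ht)]. unfold enorm, znorm.
  apply sqrt_le_1_alt.
  assert (fsum d (fun l => w m t l ^ 2) <= fsum n (fun i0 => fsum d (fun l => w i0 t l ^ 2))).
  { apply (fsum_elem_le n (fun i0 => fsum d (fun l => w i0 t l ^ 2))); auto.
    intros; apply fsum_nonneg; intros; apply pow2_ge_0. }
  assert (0 <= fsum k (fun j0 => fsum d (fun l => u j0 (y t) t l ^ 2))).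
  { apply fsum_nonneg; intros; apply fsum_nonneg; intros; apply pow2_ge_0. }
  lra. Qed.

Lemma cc_deriv xi : derivable_pt_lim cc xi (Z + eps).
Proof. unfold cc. apply dpl_aff. Qed.

Lemma q_deriv m xi : (m < n)%nat -> 0 < xi -> ~ E xi -> derivable_pt_lim (q m) xi (Dq m xi).
Proof. intros Hm Hxi HE. unfold q, Dq. apply dpl_minus; [|apply cc_deriv].
  apply (dpl_dot d e (fun s => x s m)). intros l Hl. apply (proj2 (HEd xi Hxi HE)); auto. Qed.

Lemma q_cont m T : (m < n)%nat -> contI t0 T (q m).
Proof. intros Hm. unfold q. apply (contI_minus t0 T (fun t => dot d e (x t m)) cc).
  apply (contI_dot t0 T d e (fun t => x t m)); auto.
  unfold cc. apply contI_aff. Qed.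

Lemma growth (F F' : R -> R) T : t0 <= T -> contI t0 T F ->
  (forall xi, t0 < xi -> ~ E xi -> derivable_pt_lim F xi (F' xi) /\ F' xi <= Z) ->
  forall t, t0 <= t <= T -> F t < F t0 + (Z + eps) * (t - t0) + eps.
Proof. intros HTT Hc Hd t Ht.
  assert (Hbar : forall t j, t0 <= t <= T -> (j < 1)%nat -> 0 < F t0 + (Z + eps) * (t - t0) + eps - F t).
  2:{ specialize (Hbar t O Ht ltac:(lia)). lra. }
  apply (barrier 1 (fun _ t => F t0 + (Z + eps) * (t - t0) + eps - F t) t0 T); auto.
  - intros. apply contI_minus; auto. apply contI_aff.
  - intros. lra.
  - intros ts j' Hts Hj' Hg Hpos.
    apply (lc_deriv t0 T ts (fun t => F t0 + (Z + eps) * (t - t0) + eps - F t) (fun t => Z + eps - F' t)); auto.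
    + apply contI_minus; auto. apply contI_aff.
    + intros xi Hxi. apply (Hpos xi O); auto.
    + destruct (avoid E HEf ts) as [s0 [Hs0 Hav]]. exists (Rmax s0 t0). split.
      apply Rmax_lub_lt; lra. intros xi Hxi.
      assert (s0 <= Rmax s0 t0) by apply Rmax_l. assert (t0 <= Rmax s0 t0) by apply Rmax_r.
      assert (NE : ~ E xi) by (apply Hav; lra).
      destruct (Hd xi ltac:(lra) NE) as [D1 D2]. split.
      apply dpl_aff_minus; auto. lra. Qed.

Lemma step1 t j' : t0 <= t <= T1 -> (j' < k)%nat ->
  dot d e (y t j') < dot d e (y t0 j') + (Z + eps) * (t - t0) + eps /\
  dot d e (y t j') > dot d e (y t0 j') - (Z + eps) * (t - t0) - eps.
Proof. intros Ht Hj'. assert (t0 <= T1) by (unfold T1; lra). split.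
  - apply (growth (fun s => dot d e (y s j')) (fun s => dot d e (u j' (y s) s)) T1); auto.
    + apply contI_dot; auto; intros l Hl; apply Hyc; auto.
    + intros xi Hxi NE. split.
      * apply (dpl_dot d e (fun s => y s j')). intros l Hl. apply (proj1 (HEd xi ltac:(lra) NE)); auto.
      * eapply Rle_trans. apply cs_lemma; eauto. apply u_bound; auto; lra.
  - assert (G : forall t, t0 <= t <= T1 -> dot d (fun l => - e l) (y t j') <
        dot d (fun l => - e l) (y t0 j') + (Z + eps) * (t - t0) + eps).
    { apply (growth (fun s => dot d (fun l => - e l) (y s j'))
                       (fun s => dot d (fun l => - e l) (u j' (y s) s)) T1 H).
      + apply contI_dot; auto; intros l Hl; apply Hyc; auto.
      + intros xi Hxi NE. split.
        * apply (dpl_dot d (fun l => - e l) (fun s => y s j')). intros l Hl. apply (proj1 (HEd xi ltac:(lra) NE)); auto.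
        * eapply Rle_trans. apply cs_lemma. rewrite sq_opp; eauto. apply u_bound; auto; lra. }
    specialize (G t Ht). rewrite !dot_opp in G. lra. Qed.

Lemma cc_ge_y xi j' : t0 <= xi <= T1 -> (j' < k)%nat -> dot d e (y xi j') < cc xi.
Proof. intros Hxi Hj'. destruct (step1 xi j' Hxi Hj') as [H1 _].
  assert (dot d e (y t0 j') <= P0). { unfold P0, psi. apply (mx_ge k (fun j0 => dot d e (y t0 j0))). auto. }
  unfold cc. lra. Qed.

Lemma RB xi m U : t0 < xi <= T1 -> (m < n)%nat -> 0 <= U ->
  (forall m', (m' < n)%nat -> q m' xi - q m xi <= U) -> 0 <= q m xi ->
  Dq m xi <= AA * U - eps /\ (Elf (sigma xi) j m = true -> Dq m xi <= AA * U - bstar * q m xi - eps).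
Proof. intros Hxi Hm HU HqU Hq0. unfold Dq. rewrite dot_rhs.
  set (S1 := fsum n _). set (S2 := fsum k _).
  assert (HS1 : S1 <= AA * U).
  { unfold S1, AA. rewrite Rmult_assoc. apply fsum_const_le. intros m' Hm'.
    destruct (Eff (sigma xi) m' m).
    - replace (dot d e (x xi m') - dot d e (x xi m)) with (q m' xi - q m xi) by (unfold q; ring).
      destruct (Ha m m' (x xi) (y xi) xi Hm Hm' ltac:(lra)) as [A1 A2].
      specialize (HqU m' Hm'). pose proof (Rle_abs astar_up).
      assert (a m m' (x xi) (y xi) xi * (q m' xi - q m xi) <= a m m' (x xi) (y xi) xi * U).
      { apply Rmult_le_compat_l; lra. }
      nra.
    - pose proof (Rabs_pos astar_up). nra. }
  assert (Hterm : forall j', (j' < k)%nat ->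
     (if Elf (sigma xi) j' m then b m j' (x xi) (y xi) xi * (dot d e (y xi j') - dot d e (x xi m)) else 0)
     <= (if Elf (sigma xi) j' m then - bstar * q m xi else 0)).
  { intros j' Hj'. destruct (Elf (sigma xi) j' m); [|lra].
    pose proof (cc_ge_y xi j' ltac:(lra) Hj'). pose proof (Hbb m j' (x xi) (y xi) xi Hm Hj' ltac:(lra)).
    assert (dot d e (y xi j') - dot d e (x xi m) <= - q m xi) by (unfold q; lra).
    assert (b m j' (x xi) (y xi) xi * (dot d e (y xi j') - dot d e (x xi m)) <= b m j' (x xi) (y xi) xi * (- q m xi)).
    { apply Rmult_le_compat_l; lra. }
    nra. }
  assert (HS2 : S2 <= 0).
  { unfold S2. apply Rle_trans with (fsum k (fun _ => 0)); [|rewrite fsum_zero; lra].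
    apply fsum_le. intros j' Hj'. specialize (Hterm j' Hj').
    destruct (Elf (sigma xi) j' m). pose proof (Rmult_le_pos bstar (q m xi)). nra. lra. }
  assert (HS3 : dot d e (w m xi) <= Z).
  { eapply Rle_trans. apply cs_lemma; eauto. apply w_bound; auto; lra. }
  split. lra.
  intros Harc'. assert (S2 <= - bstar * q m xi).
  { unfold S2. eapply Rle_trans. apply fsum_nonpos_elem; [|apply Hj].
    intros j' Hj'. specialize (Hterm j' Hj'). destruct (Elf (sigma xi) j' m); nra.
    specialize (Hterm j Hj). rewrite Harc' in Hterm |- *. auto. }
  lra. Qed.


Lemma KK_pos : 1 <= KK.
Proof. pose proof AA_pos. unfold KK. lra. Qed.

Lemma step2 t m : t0 <= t <= T1 -> (m < n)%nat -> q m t < D0 + eps.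
Proof.
  intros Ht Hm.
  assert (Hbar : forall t m, t0 <= t <= T1 -> (m < n)%nat -> 0 < D0 + eps - q m t).
  2:{ specialize (Hbar t m Ht Hm). lra. }
  pose proof AA_pos as HAA.
  apply (barrier n (fun m t => D0 + eps - q m t) t0 T1).
  - unfold T1; lra.
  - intros m' Hm'. apply contI_minus. apply contI_const. apply q_cont; auto.
  - intros m' Hm'.
    assert (dot d e (x t0 m') - P0 <= D0).
    { eapply Rle_trans. apply (dual_lower k d e (y t0) (x t0 m') Hk He). unfold D0, dist_state.
      apply (fmax_ge n (fun i0 => dist_hull k d (y t0) (x t0 i0))); auto. }
    unfold q, cc. replace (t0 - t0) with 0 by ring. lra.
  - intros ts m' Hts Hm' Hg Hpos.
    set (s' := Rmin eps (eps / (2 * AA))).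
    assert (Hs'0 : 0 < s'). { apply Rmin_pos. lra. apply Rdiv_lt_0_compat; lra. }
    assert (Hs'1 : s' <= eps) by apply Rmin_l.
    assert (Hs'2 : AA * s' <= eps / 2).
    { assert (s' <= eps / (2 * AA)) by apply Rmin_r.
      apply (Rmult_le_compat_l AA) in H; [|lra]. replace (AA * (eps / (2 * AA))) with (eps / 2) in H by (field; lra). lra. }
    destruct (q_cont m' T1 Hm' ts ltac:(lra) s' Hs'0) as [dl [Hdl Pdl]].
    apply (lc_deriv t0 T1 ts (fun t => D0 + eps - q m' t) (fun t => 0 - Dq m' t)).
    + lra.
    + apply contI_minus. apply contI_const. apply q_cont; auto.
    + auto.
    + intros xi Hxi. apply (Hpos xi m'); auto.
    + destruct (avoid E HEf ts) as [s0 [Hs0 Hav]]. exists (Rmax (Rmax s0 t0) (ts - dl)). split.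
      * apply Rmax_lub_lt; [apply Rmax_lub_lt|]; lra.
      * intros xi Hxi.
        assert (Rmax s0 t0 <= Rmax (Rmax s0 t0) (ts - dl)) by apply Rmax_l.
        assert (ts - dl <= Rmax (Rmax s0 t0) (ts - dl)) by apply Rmax_r.
        assert (s0 <= Rmax s0 t0) by apply Rmax_l. assert (t0 <= Rmax s0 t0) by apply Rmax_r.
        assert (NE : ~ E xi) by (apply Hav; lra).
        split. apply dpl_minus. apply dpl_const. apply q_deriv; auto; lra.
        assert (P1 : Rabs (q m' xi - q m' ts) < s'). { apply Pdl. lra. rewrite Rabs_left; lra. }
        apply Rabs_def2 in P1.
        assert (Hq0 : 0 <= q m' xi). { pose proof D0_nonneg. lra. }
        assert (HU : forall m'', (m'' < n)%nat -> q m'' xi - q m' xi <= s').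
        { intros m'' Hm''. specialize (Hpos xi m'' ltac:(lra) Hm''). lra. }
        destruct (RB xi m' s' ltac:(unfold T1 in *; lra) Hm' ltac:(lra) HU Hq0) as [R1 _].
        lra.
Qed.

Lemma dB3 xi : derivable_pt_lim (fun t => D0 * (1 - c1 * (t - t0)) + eps) xi (- (D0 * c1)).
Proof. eapply dpl_ext; [|apply (dpl_aff D0 (- (D0 * c1)) eps t0 xi)]. intros; simpl; ring. Qed.

Lemma step3 t : t0 <= t <= t0 + tauD -> q i t < D0 * (1 - c1 * (t - t0)) + eps.
Proof.
  intros Ht.
  assert (Hbar : forall t m, t0 <= t <= t0 + tauD -> (m < 1)%nat -> 0 < D0 * (1 - c1 * (t - t0)) + eps - q i t).
  2:{ specialize (Hbar t O Ht ltac:(lia)). lra. }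
  pose proof AA_pos as HAA. pose proof KK_pos as HKK. pose proof D0_nonneg as HD0.
  destruct c1_facts as [Hc1 [Hc2 Hc3]].
  assert (HC : contI t0 (t0 + tauD) (fun t => D0 * (1 - c1 * (t - t0)) + eps - q i t)).
  { apply contI_minus. apply (contI_of_deriv _ _ _ (fun _ => - (D0 * c1))). intros; apply dB3. apply q_cont; auto. }
  apply (barrier 1 (fun _ t => D0 * (1 - c1 * (t - t0)) + eps - q i t) t0 (t0 + tauD)).
  - lra.
  - intros; auto.
  - intros m' Hm'. pose proof (step2 t0 i ltac:(unfold T1; lra) Hi). replace (t0 - t0) with 0 by ring. lra.
  - intros ts m' Hts Hm' Hg Hpos.
    set (s' := Rmin eps (eps / KK)).
    assert (Hs'0 : 0 < s'). { apply Rmin_pos. lra. apply Rdiv_lt_0_compat; lra. }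
    assert (Hs'1 : s' <= eps) by apply Rmin_l.
    assert (Hs'2 : KK * s' <= eps).
    { assert (s' <= eps / KK) by apply Rmin_r.
      apply (Rmult_le_compat_l KK) in H; [|lra]. replace (KK * (eps / KK)) with eps in H by (field; lra). lra. }
    destruct (HC ts ltac:(lra) s' Hs'0) as [dl [Hdl Pdl]].
    apply (lc_deriv t0 (t0 + tauD) ts (fun t => D0 * (1 - c1 * (t - t0)) + eps - q i t)
             (fun t => - (D0 * c1) - Dq i t)).
    + lra.
    + auto.
    + auto.
    + intros xi Hxi. apply (Hpos xi O); auto.
    + destruct (avoid E HEf ts) as [s0 [Hs0 Hav]]. exists (Rmax (Rmax s0 t0) (ts - dl)). split.
      * apply Rmax_lub_lt; [apply Rmax_lub_lt|]; lra.
      * intros xi Hxi.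
        assert (Rmax s0 t0 <= Rmax (Rmax s0 t0) (ts - dl)) by apply Rmax_l.
        assert (ts - dl <= Rmax (Rmax s0 t0) (ts - dl)) by apply Rmax_r.
        assert (s0 <= Rmax s0 t0) by apply Rmax_l. assert (t0 <= Rmax s0 t0) by apply Rmax_r.
        assert (NE : ~ E xi) by (apply Hav; lra).
        split. apply dpl_minus. apply dB3. apply q_deriv; auto; lra.
        assert (P1 : Rabs ((D0 * (1 - c1 * (xi - t0)) + eps - q i xi) - (D0 * (1 - c1 * (ts - t0)) + eps - q i ts)) < s').
        { apply Pdl. lra. rewrite Rabs_left; lra. }
        apply Rabs_def2 in P1.
        specialize (Hpos xi O ltac:(lra) ltac:(lia)).
        set (G := D0 * (1 - c1 * (xi - t0)) + eps - q i xi) in *.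
        set (sx := xi - t0) in *.
        assert (Hsx : 0 <= sx <= tauD) by (unfold sx; lra).
        assert (Hmu : 0 <= c1 * sx <= c1 * tauD). { split. nra. apply Rmult_le_compat_l; lra. }
        assert (HqG : q i xi = D0 * (1 - c1 * sx) + eps - G) by (unfold G; ring).
        assert (HG : G < s') by lra.
        assert (Hq0 : 0 <= q i xi). { assert (0 <= D0 * (1 - c1 * sx)) by (apply Rmult_le_pos; lra). lra. }
        set (U := D0 + eps - q i xi).
        assert (HU0 : 0 <= U). { unfold U. assert (D0 * (1 - c1 * sx) <= D0) by nra. lra. }
        assert (HU : forall m'', (m'' < n)%nat -> q m'' xi - q i xi <= U).
        { intros m'' Hm''. pose proof (step2 xi m'' ltac:(unfold T1; lra) Hm''). unfold U. lra. }
        destruct (RB xi i U ltac:(unfold T1 in *; lra) Hi HU0 HU Hq0) as [_ R2].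
        specialize (R2 (Harc xi ltac:(lra) ltac:(lra))).
        assert (Key : 0 <= D0 * (bstar - c1 * (1 + KK * sx))).
        { apply Rmult_le_pos; auto. rewrite <- Hc2 at 1. assert (c1 * (KK * sx) <= c1 * (KK * tauD)).
          apply Rmult_le_compat_l; [lra|]. apply Rmult_le_compat_l; lra. nra. }
        assert (KG : KK * G < eps). { assert (KK * G < KK * s') by (apply Rmult_lt_compat_l; lra). lra. }
        assert (EU : U = D0 * c1 * sx + G) by (unfold U; rewrite HqG; ring).
        rewrite EU in R2. rewrite HqG in R2. unfold KK in Key, KG.
        assert (0 < bstar * eps) by nra.
        nra.
Qed.

Definition ex4 (t : R) := exp (- AA * t + AA * (t0 + tauD)).

Lemma dB4 xi : derivable_pt_lim (fun t => D0 * (1 - c1 * tauD * ex4 t) + eps) xi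
   (D0 * (0 - c1 * tauD * (- AA * ex4 xi)) + 0).
Proof. unfold ex4. apply dpl_plus; [|apply dpl_const]. apply dpl_scal. apply dpl_minus. apply dpl_const.
  apply dpl_scal. apply dpl_explin. Qed.

Lemma step4 t : t0 + tauD <= t <= T1 -> q i t < D0 * (1 - c1 * tauD * ex4 t) + eps.
Proof.
  intros Ht.
  assert (Hbar : forall t m, t0 + tauD <= t <= T1 -> (m < 1)%nat -> 0 < D0 * (1 - c1 * tauD * ex4 t) + eps - q i t).
  2:{ specialize (Hbar t O Ht ltac:(lia)). lra. }
  pose proof AA_pos as HAA. pose proof D0_nonneg as HD0.
  destruct c1_facts as [Hc1 [Hc2 Hc3]].
  assert (HC : contI (t0 + tauD) T1 (fun t => D0 * (1 - c1 * tauD * ex4 t) + eps - q i t)).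
  { apply contI_minus. eapply contI_of_deriv. intros; apply dB4.
    apply (contI_sub t0 T1); [lra|lra|apply q_cont; auto]. }
  apply (barrier 1 (fun _ t => D0 * (1 - c1 * tauD * ex4 t) + eps - q i t) (t0 + tauD) T1).
  - unfold T1; lra.
  - intros; auto.
  - intros m' Hm'. pose proof (step3 (t0 + tauD) ltac:(lra)).
    unfold ex4. replace (- AA * (t0 + tauD) + AA * (t0 + tauD)) with 0 by ring. rewrite exp_0.
    replace (t0 + tauD - t0) with tauD in H by ring. lra.
  - intros ts m' Hts Hm' Hg Hpos.
    set (s' := Rmin eps (eps / (2 * AA))).
    assert (Hs'0 : 0 < s'). { apply Rmin_pos. lra. apply Rdiv_lt_0_compat; lra. }
    assert (Hs'1 : s' <= eps) by apply Rmin_l.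
    assert (Hs'2 : AA * s' <= eps / 2).
    { assert (s' <= eps / (2 * AA)) by apply Rmin_r.
      apply (Rmult_le_compat_l AA) in H; [|lra]. replace (AA * (eps / (2 * AA))) with (eps / 2) in H by (field; lra). lra. }
    destruct (HC ts ltac:(lra) s' Hs'0) as [dl [Hdl Pdl]].
    apply (lc_deriv (t0 + tauD) T1 ts (fun t => D0 * (1 - c1 * tauD * ex4 t) + eps - q i t)
             (fun t => (D0 * (0 - c1 * tauD * (- AA * ex4 t)) + 0) - Dq i t)).
    + lra.
    + auto.
    + auto.
    + intros xi Hxi. apply (Hpos xi O); auto.
    + destruct (avoid E HEf ts) as [s0 [Hs0 Hav]]. exists (Rmax (Rmax s0 (t0 + tauD)) (ts - dl)). split.
      * apply Rmax_lub_lt; [apply Rmax_lub_lt|]; lra.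
      * intros xi Hxi.
        assert (Rmax s0 (t0 + tauD) <= Rmax (Rmax s0 (t0 + tauD)) (ts - dl)) by apply Rmax_l.
        assert (ts - dl <= Rmax (Rmax s0 (t0 + tauD)) (ts - dl)) by apply Rmax_r.
        assert (s0 <= Rmax s0 (t0 + tauD)) by apply Rmax_l. assert (t0 + tauD <= Rmax s0 (t0 + tauD)) by apply Rmax_r.
        assert (NE : ~ E xi) by (apply Hav; lra).
        split. apply dpl_minus. apply dB4. apply q_deriv; auto; lra.
        assert (P1 : Rabs ((D0 * (1 - c1 * tauD * ex4 xi) + eps - q i xi) - (D0 * (1 - c1 * tauD * ex4 ts) + eps - q i ts)) < s').
        { apply Pdl. lra. rewrite Rabs_left; lra. }
        apply Rabs_def2 in P1.
        specialize (Hpos xi O ltac:(lra) ltac:(lia)).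
        set (G := D0 * (1 - c1 * tauD * ex4 xi) + eps - q i xi) in *.
        set (X := ex4 xi) in *.
        assert (HX : 0 < X <= 1). { unfold X, ex4. split. apply exp_pos. apply exp_le1. nra. }
        assert (Hnu : 0 <= c1 * tauD * X <= c1 * tauD).
        { split. apply Rmult_le_pos; [nra|lra]. rewrite <- (Rmult_1_r (c1 * tauD)) at 2. apply Rmult_le_compat_l; nra. }
        assert (HqG : q i xi = D0 * (1 - c1 * tauD * X) + eps - G) by (unfold G; ring).
        assert (HG : G < s') by lra.
        assert (Hq0 : 0 <= q i xi). { assert (0 <= D0 * (1 - c1 * tauD * X)) by (apply Rmult_le_pos; lra). lra. }
        set (U := D0 + eps - q i xi).
        assert (HU0 : 0 <= U). { unfold U. assert (D0 * (1 - c1 * tauD * X) <= D0) by nra. lra. }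
        assert (HU : forall m'', (m'' < n)%nat -> q m'' xi - q i xi <= U).
        { intros m'' Hm''. pose proof (step2 xi m'' ltac:(unfold T1 in *; lra) Hm''). unfold U. lra. }
        destruct (RB xi i U ltac:(unfold T1 in *; lra) Hi HU0 HU Hq0) as [R1 _].
        assert (EU : U = D0 * (c1 * tauD * X) + G) by (unfold U; rewrite HqG; ring).
        rewrite EU in R1.
        assert (AG : AA * G < eps / 2). { assert (AA * G < AA * s') by (apply Rmult_lt_compat_l; lra). lra. }
        nra.
Qed.

Lemma final t : t0 <= t <= T1 ->
  dot d e (x t i) - psi k d e (y t) < D0 * mu_f AA bstar tauD (t - t0) + 2 * (Z + eps) * (t - t0) + 3 * eps.
Proof.
  intros Ht. pose proof D0_nonneg as HD0.
  assert (Hq : q i t < D0 * mu_f AA bstar tauD (t - t0) + eps).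
  { unfold mu_f. fold KK. fold c1.
    destruct (Rle_lt_dec t (t0 + tauD)).
    - pose proof (step3 t ltac:(lra)).
      assert (D0 * (1 - c1 * (t - t0)) <= D0 * Rmax (1 - c1 * (t - t0)) (1 - c1 * tauD * exp (- AA * (t - t0) + AA * tauD))).
      { apply Rmult_le_compat_l; auto. apply Rmax_l. } lra.
    - pose proof (step4 t ltac:(lra)). unfold ex4 in H.
      replace (- AA * t + AA * (t0 + tauD)) with (- AA * (t - t0) + AA * tauD) in H by ring.
      assert (D0 * (1 - c1 * tauD * exp (- AA * (t - t0) + AA * tauD)) <= D0 * Rmax (1 - c1 * (t - t0)) (1 - c1 * tauD * exp (- AA * (t - t0) + AA * tauD))).
      { apply Rmult_le_compat_l; auto. apply Rmax_r. } lra. }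
  destruct (mx_att k (fun j0 => dot d e (y t0 j0))) as [j0 [Hj0 E0]].
  assert (Hj0' : (j0 < k)%nat) by lia.
  destruct (step1 t j0 Ht Hj0') as [_ L].
  assert (dot d e (y t j0) <= psi k d e (y t)). { unfold psi. apply (mx_ge k (fun j1 => dot d e (y t j1))). auto. }
  assert (P0 = dot d e (y t0 j0)) by (unfold P0, psi; auto).
  unfold q, cc in Hq. lra.
Qed.

End Dyn.

Lemma exp_ge1 x : 0 <= x -> 1 <= exp x.
Proof. intros H. destruct (Req_dec x 0). subst; rewrite exp_0; lra.
  rewrite <- exp_0. left. apply exp_increasing. lra. Qed.

Lemma mu_props (A bs tauD Tstar : R) : 1 <= A -> 0 < bs -> 0 < tauD -> tauD < Tstar ->
  let mu := mu_f A bs tauD in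
    (forall t, 0 <= t <= Tstar -> 0 < mu t <= 1) /\
    (forall t, 0 <= t <= Tstar -> forall eps, eps > 0 -> exists delta, delta > 0 /\
       forall s, 0 <= s <= Tstar -> Rabs (s - t) < delta -> Rabs (mu s - mu t) < eps) /\
    mu 0 = 1 /\
    (forall s t, 0 <= s -> s < t -> t <= tauD -> mu t < mu s) /\
    (forall s t, tauD <= s -> s < t -> t <= Tstar -> mu s < mu t) /\
    mu Tstar < 1.
Proof.
  intros HA Hb HtD HT mu.
  set (c1 := bs / (1 + (A + bs) * tauD)).
  assert (P : 0 < 1 + (A + bs) * tauD) by nra.
  assert (Hc1 : 0 < c1) by (apply Rdiv_lt_0_compat; lra).
  assert (Hc3 : c1 * tauD < 1).
  { apply (Rmult_lt_reg_r (1 + (A + bs) * tauD)); auto. unfold c1.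
    replace (bs / (1 + (A + bs) * tauD) * tauD * (1 + (A + bs) * tauD)) with (bs * tauD) by (field; lra). nra. }
  assert (Hct : 0 < c1 * tauD) by nra.
  assert (Emu : forall s, mu s = Rmax (1 - c1 * s) (1 - c1 * tauD * exp (- A * s + A * tauD))) by reflexivity.
  assert (L1 : forall s, 0 <= s <= tauD -> mu s = 1 - c1 * s).
  { intros s Hs. rewrite Emu. apply Rmax_left.
    assert (1 <= exp (- A * s + A * tauD)) by (apply exp_ge1; nra).
    assert (c1 * s <= c1 * tauD) by (apply Rmult_le_compat_l; lra).
    assert (c1 * tauD <= c1 * tauD * exp (- A * s + A * tauD)) by nra. lra. }
  assert (L2 : forall s, tauD <= s -> mu s = 1 - c1 * tauD * exp (- A * s + A * tauD)).
  { intros s Hs. rewrite Emu. apply Rmax_right.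
    assert (exp (- A * s + A * tauD) <= 1) by (apply exp_le1; nra).
    assert (0 < exp (- A * s + A * tauD)) by apply exp_pos.
    assert (c1 * tauD <= c1 * s) by (apply Rmult_le_compat_l; lra).
    assert (c1 * tauD * exp (- A * s + A * tauD) <= c1 * tauD) by nra. lra. }
  split; [|split; [|split; [|split; [|split]]]].
  - intros t Ht. destruct (Rle_lt_dec t tauD).
    + rewrite L1 by lra. assert (c1 * t <= c1 * tauD) by (apply Rmult_le_compat_l; lra).
      assert (0 <= c1 * t) by nra. lra.
    + rewrite L2 by lra.
      assert (exp (- A * t + A * tauD) <= 1) by (apply exp_le1; nra).
      assert (0 < exp (- A * t + A * tauD)) by apply exp_pos. nra.
  - intros t Ht eps Heps. revert t Ht eps Heps. fold (contI 0 Tstar mu).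
    apply (contI_ext 0 Tstar (fun s => Rmax (1 - c1 * s) (1 - c1 * tauD * exp (- A * s + A * tauD)))).
    intros; symmetry; apply Emu.
    apply contI_max.
    + apply (contI_of_deriv _ _ _ (fun _ => 0 - c1 * 1)). intros. apply dpl_minus. apply dpl_const.
      apply dpl_scal. apply dpl_id.
    + apply (contI_of_deriv _ _ _ (fun t => 0 - c1 * tauD * (- A * exp (- A * t + A * tauD)))). intros.
      apply dpl_minus. apply dpl_const. apply dpl_scal. apply dpl_explin.
  - rewrite L1 by lra. ring.
  - intros s t Hs Hst Ht. rewrite !L1 by lra. assert (c1 * s < c1 * t) by (apply Rmult_lt_compat_l; lra). lra.
  - intros s t Hs Hst Ht. rewrite !L2 by lra.
    assert (exp (- A * t + A * tauD) < exp (- A * s + A * tauD)) by (apply exp_increasing; nra).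
    assert (0 < c1 * tauD) by nra. nra.
  - rewrite L2 by lra. assert (0 < exp (- A * Tstar + A * tauD)) by apply exp_pos.
    assert (0 < c1 * tauD) by nra. nra.
Qed.

Theorem lemma5 (n : nat) (astar_up bstar tauD Tstar : R)
  (Hn : (2 <= n)%nat) (Hb : 0 < bstar) (HtauD : 0 < tauD) (HT : tauD < Tstar) :
  exists (mu : R -> R) (gamma1 : R),
    gamma1 > 0 /\
    (forall t, 0 <= t <= Tstar -> 0 < mu t <= 1) /\
    (forall t, 0 <= t <= Tstar -> forall eps, eps > 0 -> exists delta, delta > 0 /\
       forall s, 0 <= s <= Tstar -> Rabs (s - t) < delta -> Rabs (mu s - mu t) < eps) /\
    mu 0 = 1 /\
    (forall s t, 0 <= s -> s < t -> t <= tauD -> mu t < mu s) /\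
    (forall s t, tauD <= s -> s < t -> t <= Tstar -> mu s < mu t) /\
    mu Tstar < 1 /\
    forall (k d : nat) (astar_lo : R)
      (Np : nat) (Eff Elf : nat -> nat -> nat -> bool) (sigma : R -> nat)
      (a b : nat -> nat -> stack -> stack -> R -> R)
      (u : nat -> stack -> R -> vec) (w : nat -> R -> vec)
      (x y : R -> stack) (Z : R) (t0 : R) (i j : nat),
    (1 <= k)%nat -> (1 <= d)%nat ->
    0 < astar_lo -> astar_lo <= astar_up ->
    dwell_signal Np tauD sigma ->
    (forall i' j', (i' < n)%nat -> (j' < n)%nat -> cont_weight n k d (a i' j')) ->
    (forall i' j', (i' < n)%nat -> (j' < k)%nat -> cont_weight n k d (b i' j')) ->
    (forall i' j' X Y t, (i' < n)%nat -> (j' < n)%nat -> 0 <= t ->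
       astar_lo <= a i' j' X Y t <= astar_up) ->
    (forall i' j' X Y t, (i' < n)%nat -> (j' < k)%nat -> 0 <= t ->
       bstar <= b i' j' X Y t) ->
    (forall j' l Y t, (j' < k)%nat -> (l < d)%nat -> 0 <= t ->
       forall eps, eps > 0 -> exists delta, delta > 0 /\
         forall Y', close k d delta Y Y' -> Rabs (u j' Y' t l - u j' Y t l) < eps) ->
    (forall j' l Y, (j' < k)%nat -> (l < d)%nat -> exists E : R -> Prop,
       loc_finite E /\ forall t, 0 <= t -> ~ E t ->
         forall eps, eps > 0 -> exists delta, delta > 0 /\
           forall s, 0 <= s -> Rabs (s - t) < delta ->
             Rabs (u j' Y s l - u j' Y t l) < eps) ->
    (forall i' l, (i' < n)%nat -> (l < d)%nat -> cont_nonneg (fun t => w i' t l)) ->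
    (forall i' l, (i' < n)%nat -> (l < d)%nat -> cont_nonneg (fun t => x t i' l)) ->
    (forall j' l, (j' < k)%nat -> (l < d)%nat -> cont_nonneg (fun t => y t j' l)) ->
    (exists E : R -> Prop, loc_finite E /\
       forall t, 0 < t -> ~ E t ->
         (forall j' l, (j' < k)%nat -> (l < d)%nat ->
            derivable_pt_lim (fun s => y s j' l) t (u j' (y t) t l)) /\
         (forall i' l, (i' < n)%nat -> (l < d)%nat ->
            derivable_pt_lim (fun s => x s i' l) t
              (follower_rhs n k Eff Elf sigma a b w (x t) (y t) t i' l))) ->
    is_lub (fun r => exists t, 0 <= t /\ r = znorm n k d u w y t) Z ->
    0 <= t0 -> (i < n)%nat -> (j < k)%nat ->
    (forall t, t0 <= t -> t < t0 + tauD -> Elf (sigma t) j i = true) ->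
    forall t, t0 <= t -> t <= t0 + Tstar ->
      dist_hull k d (y t) (x t i)
        <= mu (t - t0) * dist_state n k d (y t0) (x t0) + gamma1 * Z.
Proof.
  assert (HA : 1 <= INR n * (Rabs astar_up + 1)).
  { assert (1 <= INR n) by (apply (le_INR 1); lia). pose proof (Rabs_pos astar_up). nra. }
  destruct (mu_props (INR n * (Rabs astar_up + 1)) bstar tauD Tstar HA Hb HtauD HT)
    as [M1 [M2 [M3 [M4 [M5 M6]]]]].
  exists (mu_f (INR n * (Rabs astar_up + 1)) bstar tauD), (2 * Tstar).
  split; [lra|]. split; [exact M1|]. split; [exact M2|]. split; [exact M3|].
  split; [exact M4|]. split; [exact M5|]. split; [exact M6|].
  intros k d astar_lo Np Eff Elf sigma a b u w x y Z t0 i j Hk Hd Hlo Hlu Hdw Hac Hbc Ha Hbb Hu1 Hu2 Hwc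
    Hxc Hyc [E [HEf HEd]] HZ Ht0 Hi Hj Harc t Ht1 Ht2.
  assert (HZ0 : 0 <= Z).
  { destruct HZ as [H1 _]. eapply Rle_trans; [|apply H1; exists 0; split; [lra|reflexivity]]. apply sqrt_pos. }
  assert (HD0 : 0 <= dist_state n k d (y t0) (x t0)) by apply fmax_nonneg.
  apply (le_of_eps _ _ (2 * Tstar + 4)). lra.
  intros eps Heps.
  destruct (dual_upper k d (y t) (x t i) eps Hk Heps) as [e [He Hdist]].
  pose proof (final n k d astar_up bstar astar_lo tauD Tstar Eff Elf sigma a b u w x y Z t0 i j E e eps
    ltac:(lia) Hk Hb HtauD HT Hlo Ha Hbb Hxc Hyc HEf HEd HZ Ht0 Hi Hj Harc He Heps t) as F.
  unfold T1, AA, D0 in F. specialize (F ltac:(lra)).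
  assert ((Z + eps) * (t - t0) <= (Z + eps) * Tstar) by (apply Rmult_le_compat_l; lra).
  nra.
Qed.
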